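(* Let $N=\{1,\dots,n\}$, $n\ge2$, be a parallel-link network with unit demand and latency functions $\ell_i\in\mathcal{L}_c$. Suppose that $x_i(0)>0$ for all $i\in N$ (the untolled Wardrop equilibrium has full support). Let $c>0$ and $t\in\mathcal{T}(c)$. Then $x_i(t)>0$ and $t_i>0$ for all $i\in N$.
   Context: $\mathcal{L}_c$: strictly increasing, convex, continuously differentiable functions $\mathbb{R}_+\to\mathbb{R}_+$. Parallel links $N$, one unit of flow; flows $x\in\mathbb{R}^N_+$ with $\sum_ix_i=1$. For tolls $t\in\mathbb{R}^N_+$, $x(t)$ is the unique Wardrop equilibrium for $t$: for all $i,j$ with $x_i>0$, $\ell_i(x_i)+t_i\le \ell_j(x_j)+t_j$; $x(0)$ is the untolled Wardrop equilibrium. Profit of firm $i$: $\Pi_i(t)=t_ix_i(t)$. For $c\in\mathbb{R}_+$, $\mathcal{T}(c)$ is the set of $c$-capped subgame perfect Nash equilibria: toll vectors $t$ with $0\le t_i\le c$ for all $i$ such that for every $i$ and every $t'_i\in[0,c]$, $\Pi_i(t_i,t_{-i})\ge\Pi_i(t'_i,t_{-i})$ (flow recomputed as the Wardrop equilibrium). *)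

(* Defs.v *)
From Stdlib Require Import Reals Lra List Arith.
Open Scope R_scope.

Definition sumN (n : nat) (f : nat -> R) : R :=
  fold_right Rplus 0 (map f (seq 0 n)).

Definition C1_on_Rplus (l : R -> R) : Prop :=
  exists l' : R -> R,
    (forall x, 0 <= x ->
       limit1_in (fun h => (l (x + h) - l x) / h)
                 (fun h => h <> 0 /\ 0 <= x + h) (l' x) 0) /\
    (forall x, 0 <= x -> limit1_in l' (fun y => 0 <= y) (l' x) x).

Definition in_Lc (l : R -> R) : Prop :=
  (forall x, 0 <= x -> 0 <= l x) /\
  (forall x y, 0 <= x -> x < y -> l x < l y) /\
  (forall x y a, 0 <= x -> 0 <= y -> 0 <= a <= 1 ->
      l (a * x + (1 - a) * y) <= a * l x + (1 - a) * l y) /\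
  C1_on_Rplus l.

Definition is_wardrop (n : nat) (l : nat -> R -> R) (t : nat -> R)
    (x : nat -> R) : Prop :=
  (forall i, (i < n)%nat -> 0 <= x i) /\
  sumN n x = 1 /\
  (forall i j, (i < n)%nat -> (j < n)%nat -> 0 < x i ->
      l i (x i) + t i <= l j (x j) + t j).

Definition upd (t : nat -> R) (i : nat) (s : R) : nat -> R :=
  fun j => if Nat.eq_dec j i then s else t j.

(* t is a c-capped subgame perfect Nash equilibrium.  Profits are
   Pi_i(t) = t_i x_i(t) with x(t) the (unique) Wardrop equilibrium; this
   is expressed relationally over all Wardrop equilibria. *)
Definition in_T (n : nat) (l : nat -> R -> R) (c : R) (t : nat -> R) : Prop :=
  (forall i, (i < n)%nat -> 0 <= t i <= c) /\
  (forall i s x x', (i < n)%nat -> 0 <= s <= c ->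
      is_wardrop n l t x -> is_wardrop n l (upd t i s) x' ->
      t i * x i >= s * x' i).

(* Main.v *)
Require Import Defs.
From Stdlib Require Import Reals Lra List Arith Lia.
Open Scope R_scope.

Lemma fold_plus_shift (l0 : list R) a : fold_right Rplus a l0 = fold_right Rplus 0 l0 + a.
Proof. induction l0; simpl; [lra|rewrite IHl0; lra]. Qed.

Lemma sumN_S n f : sumN (S n) f = sumN n f + f n.
Proof. unfold sumN. rewrite seq_S, map_app, fold_right_app. simpl. rewrite fold_plus_shift. lra. Qed.

Lemma sumN_0 f : sumN 0 f = 0.
Proof. reflexivity. Qed.

Lemma sumN_ext n f g : (forall i, (i < n)%nat -> f i = g i) -> sumN n f = sumN n g.
Proof. induction n; intros H; [reflexivity|]. rewrite !sumN_S, IHn, H; auto. Qed.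

Lemma sumN_nonneg n f : (forall i, (i < n)%nat -> 0 <= f i) -> 0 <= sumN n f.
Proof. induction n; intros H; rewrite ?sumN_0, ?sumN_S; [lra|].
  specialize (IHn (fun i Hi => H i ltac:(lia))). specialize (H n ltac:(lia)). lra. Qed.

Lemma sumN_one n f j : (forall i, (i < n)%nat -> 0 <= f i) -> (j < n)%nat -> f j <= sumN n f.
Proof. induction n; intros H Hj; [lia|]. rewrite sumN_S.
  destruct (Nat.eq_dec j n) as [->|Hne].
  - assert (0 <= sumN n f) by (apply sumN_nonneg; intros; apply H; lia). lra.
  - assert (f j <= sumN n f) by (apply IHn; [intros; apply H|]; lia).
    specialize (H n ltac:(lia)). lra. Qed.

Lemma sumN_two n f i j : (forall k, (k < n)%nat -> 0 <= f k) -> (i < n)%nat -> (j < n)%nat -> i <> j ->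
  f i + f j <= sumN n f.
Proof. induction n; intros H Hi Hj Hij; [lia|]. rewrite sumN_S.
  destruct (Nat.eq_dec i n) as [->|Hi'].
  - assert (f j <= sumN n f) by (apply sumN_one; [intros; apply H|]; lia). lra.
  - destruct (Nat.eq_dec j n) as [->|Hj'].
    + assert (f i <= sumN n f) by (apply sumN_one; [intros; apply H|]; lia). lra.
    + assert (f i + f j <= sumN n f) by (apply IHn; [intros; apply H| | |]; lia).
      specialize (H n ltac:(lia)). lra. Qed.

Lemma sumN_const1 n : sumN n (fun _ => 1) = INR n.
Proof. induction n; [reflexivity|]. rewrite sumN_S, IHn, S_INR. lra. Qed.

Lemma sumN_lt_ex n a b : sumN n a < sumN n b -> exists j, (j < n)%nat /\ a j < b j.
Proof. induction n; intros H; [rewrite !sumN_0 in H; lra|]. rewrite !sumN_S in H.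
  destruct (Rlt_le_dec (a n) (b n)).
  - exists n; split; [lia|lra].
  - destruct IHn as [j [? ?]]; [lra|]. exists j; split; [lia|lra]. Qed.

Lemma sumN_le_ex n a b i : sumN n a <= sumN n b -> (i < n)%nat -> b i < a i ->
  exists j, (j < n)%nat /\ j <> i /\ a j < b j.
Proof. induction n; intros H Hi Hba; [lia|]. rewrite !sumN_S in H.
  destruct (Nat.eq_dec i n) as [->|Hne].
  - destruct (sumN_lt_ex n a b) as [j [? ?]]; [lra|]. exists j; repeat split; [lia|lia|lra].
  - destruct (Rlt_le_dec (a n) (b n)).
    + exists n; repeat split; [lia|lia|lra].
    + destruct IHn as [j [? [? ?]]]; [lra|lia|lra|]. exists j; repeat split; [lia|auto|lra]. Qed.

Lemma sumN_cont n (g : nat -> R -> R) : (forall i, (i < n)%nat -> continuity (g i)) ->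
  continuity (fun L => sumN n (fun i => g i L)).
Proof. induction n; intros H x.
  - apply continuity_const. intros ? ?; reflexivity.
  - apply (continuity_pt_locally_ext (fun L => sumN n (fun i => g i L) + g n L) _ 1 x); [lra| |].
    + intros; rewrite sumN_S; reflexivity.
    + apply continuity_pt_plus; [apply IHn; intros; apply H; lia| apply H; lia]. Qed.
Lemma Lc_cont l0 : in_Lc l0 -> forall x, 0 <= x -> forall eps, 0 < eps ->
  exists del, 0 < del /\ forall z, 0 <= z -> Rabs (z - x) < del -> Rabs (l0 z - l0 x) < eps.
Proof.
  intros [_ [_ [_ [l' [Hd _]]]]] x Hx eps He.
  destruct (Hd x Hx 1 ltac:(lra)) as [a [Ha Hlim]].
  set (K := Rabs (l' x) + 1).
  assert (HK : 0 < K) by (unfold K; pose proof (Rabs_pos (l' x)); lra).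
  exists (Rmin a (eps / K)). split.
  { apply Rmin_pos; [lra|]. apply Rdiv_lt_0_compat; lra. }
  intros z Hz Hzx.
  destruct (Req_dec z x) as [->|Hne].
  { replace (l0 x - l0 x) with 0 by ring. rewrite Rabs_R0; lra. }
  pose proof (Rmin_l a (eps/K)). pose proof (Rmin_r a (eps/K)).
  specialize (Hlim (z - x)). simpl in Hlim. unfold R_dist in Hlim.
  assert (Hq : Rabs ((l0 (x + (z - x)) - l0 x) / (z - x) - l' x) < 1).
  { apply Hlim. split; [split; [intro; apply Hne; lra | lra] |].
    replace (z - x - 0) with (z - x) by ring. lra. }
  replace (x + (z - x)) with z in Hq by ring.
  assert (Hzx0 : z - x <> 0) by (intro; apply Hne; lra).
  set (q := (l0 z - l0 x) / (z - x)) in Hq.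
  assert (Hdiff : l0 z - l0 x = q * (z - x)) by (unfold q; field; auto).
  rewrite Hdiff, Rabs_mult.
  assert (Rabs q < K).
  { unfold K. pose proof (Rabs_triang (q - l' x) (l' x)).
    replace (q - l' x + l' x) with q in H1 by ring. lra. }
  assert (Rabs (z - x) < eps / K) by lra.
  assert (Rabs (z - x) * K < eps).
  { apply (Rmult_lt_compat_r K) in H2; [|lra]. unfold Rdiv in H2.
    rewrite Rmult_assoc, Rinv_l in H2; lra. }
  pose proof (Rabs_pos q). pose proof (Rabs_pos (z-x)). nra.
Qed.

Definition Eset (f : R -> R) (L : R) (z : R) : Prop := z = 0 \/ (0 <= z <= 1 /\ f z <= L).

Lemma Eset_bound f L : bound (Eset f L).
Proof. exists 1. intros z [->|[[? ?] ?]]; lra. Qed.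

Lemma Eset_ne f L : exists z, Eset f L z.
Proof. exists 0. left; reflexivity. Qed.

Definition phi f L : R := proj1_sig (completeness (Eset f L) (Eset_bound f L) (Eset_ne f L)).

Lemma phi_lub f L : is_lub (Eset f L) (phi f L).
Proof. unfold phi. exact (proj2_sig _). Qed.

Definition charP (f : R -> R) (y L : R) : Prop :=
  0 <= y <= 1 /\ (0 < y -> f y <= L) /\ (y < 1 -> L <= f y).

Lemma phi_char f L :
  (forall x, 0 <= x -> forall eps, 0 < eps ->
    exists del, 0 < del /\ forall z, 0 <= z -> Rabs (z - x) < del -> Rabs (f z - f x) < eps) ->
  charP f (phi f L) L.
Proof.
  intros Hc. destruct (phi_lub f L) as [Hub Hl].
  set (m := phi f L) in *.
  assert (H0 : 0 <= m) by (apply Hub; left; reflexivity).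
  assert (H1 : m <= 1).
  { apply Hl. intros z [->|[[? ?] ?]]; lra. }
  split; [lra|split].
  - intros Hm. destruct (Rle_lt_dec (f m) L) as [|Hgt]; [auto|exfalso].
    destruct (Hc m H0 (f m - L) ltac:(lra)) as [d [Hd Hz]].
    set (m' := Rmax (m - d/2) 0).
    assert (Hm' : m' < m) by (unfold m'; apply Rmax_lub_lt; lra).
    assert (m <= m'); [|lra].
    apply Hl. intros z [->|[[? ?] ?]]; [unfold m'; apply Rmax_r|].
    destruct (Rle_lt_dec z m') as [|Hzm]; [auto|exfalso].
    assert (z <= m) by (apply Hub; right; auto).
    assert (m - d/2 <= m') by apply Rmax_l.
    assert (Hzd : Rabs (z - m) < d) by (apply Rabs_def1; lra).
    specialize (Hz z ltac:(lra) Hzd). apply Rabs_def2 in Hz. lra.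
  - intros Hm. destruct (Rle_lt_dec L (f m)) as [|Hlt]; [auto|exfalso].
    destruct (Hc m H0 (L - f m) ltac:(lra)) as [d [Hd Hz]].
    set (z := Rmin (m + d/2) 1).
    assert (Hzm : m < z) by (unfold z; apply Rmin_glb_lt; lra).
    assert (z <= m + d/2) by apply Rmin_l. assert (z <= 1) by apply Rmin_r.
    assert (z <= m); [|lra].
    apply Hub. right. split; [lra|].
    assert (Hzd : Rabs (z - m) < d) by (apply Rabs_def1; lra).
    specialize (Hz z ltac:(lra) Hzd). apply Rabs_def2 in Hz. lra.
Qed.

Lemma mono_le (f : R -> R) : (forall a b, 0 <= a -> a < b -> f a < f b) ->
  forall a b, 0 <= a -> a <= b -> f a <= f b.
Proof. intros Hm a b Ha Hab. destruct (Rle_lt_or_eq_dec a b Hab) as [h| ->];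
  [left; apply Hm; auto|lra]. Qed.

Lemma char_cont (f p : R -> R) : (forall a b, 0 <= a -> a < b -> f a < f b) ->
  (forall L, charP f (p L) L) -> continuity p.
Proof.
  intros Hm Hp L0. pose proof (mono_le f Hm) as Hm'.
  intros eps Heps. simpl. unfold R_dist.
  destruct (Hp L0) as [[Hy0 Hy1] [Hpos Hlt]]. set (y0 := p L0) in *.
  assert (U : exists d1, 0 < d1 /\ forall L, Rabs (L - L0) < d1 -> p L < y0 + eps).
  { destruct (Rlt_le_dec y0 1) as [h|h].
    - set (q := Rmin (y0 + eps/2) 1).
      assert (y0 < q) by (unfold q; apply Rmin_glb_lt; lra).
      assert (q <= y0 + eps/2) by apply Rmin_l.
      assert (f y0 < f q) by (apply Hm; lra). specialize (Hlt h).
      exists (f q - L0). split; [lra|]. intros L HL. apply Rabs_def2 in HL.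
      destruct (Rlt_le_dec (p L) q) as [|Hq]; [lra|exfalso].
      destruct (Hp L) as [[? ?] [Hpos' _]].
      specialize (Hpos' ltac:(lra)). assert (f q <= f (p L)) by (apply Hm'; lra). lra.
    - exists 1. split; [lra|]. intros L _. destruct (Hp L) as [[? ?] _]. lra. }
  assert (D : exists d2, 0 < d2 /\ forall L, Rabs (L - L0) < d2 -> y0 - eps < p L).
  { destruct (Rlt_le_dec 0 y0) as [h|h].
    - set (q := Rmax (y0 - eps/2) 0).
      assert (q < y0) by (unfold q; apply Rmax_lub_lt; lra).
      assert (y0 - eps/2 <= q) by apply Rmax_l. assert (0 <= q) by apply Rmax_r.
      assert (f q < f y0) by (apply Hm; lra). specialize (Hpos h).
      exists (L0 - f q). split; [lra|]. intros L HL. apply Rabs_def2 in HL.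
      destruct (Rlt_le_dec q (p L)) as [|Hq]; [lra|exfalso].
      destruct (Hp L) as [[? ?] [_ Hlt']].
      specialize (Hlt' ltac:(lra)). assert (f (p L) <= f q) by (apply Hm'; lra). lra.
    - exists 1. split; [lra|]. intros L _. destruct (Hp L) as [[? ?] _]. lra. }
  destruct U as [d1 [Hd1 HU]]. destruct D as [d2 [Hd2 HD]].
  exists (Rmin d1 d2). split; [apply Rmin_pos; auto|].
  intros L [_ HL]. pose proof (Rmin_l d1 d2). pose proof (Rmin_r d1 d2).
  specialize (HU L ltac:(lra)). specialize (HD L ltac:(lra)).
  apply Rabs_def1; lra.
Qed.

Lemma sumN_zero n f : (forall i, (i < n)%nat -> f i = 0) -> sumN n f = 0.
Proof. induction n; intros H; [reflexivity|]. rewrite sumN_S, IHn, H; [lra|lia|]. intros; apply H; lia. Qed.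

Lemma wardrop_exists n l u : (2 <= n)%nat -> (forall i, (i < n)%nat -> in_Lc (l i)) ->
  exists x, is_wardrop n l u x.
Proof.
  intros Hn Hl.
  set (fi := fun i z => l i z + u i).
  assert (Hc : forall i, (i < n)%nat -> forall x, 0 <= x -> forall eps, 0 < eps ->
    exists del, 0 < del /\ forall z, 0 <= z -> Rabs (z - x) < del -> Rabs (fi i z - fi i x) < eps).
  { intros i Hi x Hx eps He. destruct (Lc_cont _ (Hl i Hi) x Hx eps He) as [d [Hd H]].
    exists d; split; auto. intros z Hz Hzx. unfold fi.
    replace (l i z + u i - (l i x + u i)) with (l i z - l i x) by ring. auto. }
  assert (Hm : forall i, (i < n)%nat -> forall a b, 0 <= a -> a < b -> fi i a < fi i b).
  { intros i Hi a b Ha Hab. unfold fi. destruct (Hl i Hi) as [_ [Hs _]].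
    specialize (Hs a b Ha Hab). lra. }
  set (g := fun i L => phi (fi i) L).
  assert (Hch : forall i, (i < n)%nat -> forall L, charP (fi i) (g i L) L).
  { intros i Hi L. apply phi_char. apply Hc; auto. }
  assert (Hgc : forall i, (i < n)%nat -> continuity (g i)).
  { intros i Hi. apply (char_cont (fi i)); [apply Hm; auto| apply Hch; auto]. }
  set (F := fun L => sumN n (fun i => g i L)).
  assert (HF : continuity F) by (apply sumN_cont; auto).
  set (S0 := sumN n (fun i => Rabs (fi i 0))).
  set (S1 := sumN n (fun i => Rabs (fi i 1))).
  assert (HS0 : 0 <= S0) by (apply sumN_nonneg; intros; apply Rabs_pos).
  assert (HS1 : 0 <= S1) by (apply sumN_nonneg; intros; apply Rabs_pos).
  assert (Hlow : F (- S0 - 1) = 0).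
  { apply sumN_zero. intros i Hi. destruct (Hch i Hi (-S0-1)) as [[? ?] [Hp _]].
    destruct (Rle_lt_or_eq_dec 0 (g i (-S0-1)) H) as [h|h]; [exfalso|auto].
    specialize (Hp h). assert (fi i 0 <= fi i (g i (-S0-1))) by (apply mono_le; auto; lra).
    assert (Rabs (fi i 0) <= S0) by (apply (sumN_one n (fun i => Rabs (fi i 0))); auto; intros; apply Rabs_pos).
    pose proof (Rle_abs (- fi i 0)) as Hab.
    rewrite Rabs_Ropp in Hab. lra. }
  assert (Hhigh : F (S1 + 1) = INR n).
  { rewrite <- sumN_const1. apply sumN_ext. intros i Hi.
    destruct (Hch i Hi (S1+1)) as [[? ?] [_ Hp]].
    destruct (Rle_lt_or_eq_dec (g i (S1+1)) 1 H0) as [h|h]; [exfalso|auto].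
    specialize (Hp h). assert (fi i (g i (S1+1)) <= fi i 1) by (apply mono_le; auto; lra).
    assert (Rabs (fi i 1) <= S1) by (apply (sumN_one n (fun i => Rabs (fi i 1))); auto; intros; apply Rabs_pos).
    pose proof (Rle_abs (fi i 1)). lra. }
  assert (Hn2 : 2 <= INR n) by (apply le_INR in Hn; simpl in Hn; lra).
  destruct (IVT (fun L => F L - 1) (-S0-1) (S1+1)) as [L [_ HL]].
  - intro x. exact (continuity_pt_minus F (fun _ => 1) x (HF x) (continuity_pt_const (fun _ => 1) x (fun _ _ => eq_refl))).
  - lra.
  - simpl. lra.
  - simpl. lra.
  - exists (fun i => g i L). split; [|split].
    + intros i Hi. destruct (Hch i Hi L) as [[? ?] _]. auto.
    + change (F L = 1). lra.
    + intros i j Hi Hj Hxi.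
      destruct (Hch i Hi L) as [_ [Hpi _]]. destruct (Hch j Hj L) as [[? ?] [_ Hlj]].
      specialize (Hpi Hxi). change (fi i (g i L) <= fi j (g j L)).
      destruct (Rle_lt_or_eq_dec (g j L) 1 H0) as [h|h].
      * specialize (Hlj h). lra.
      * destruct (Nat.eq_dec i j) as [->|Hij]; [lra|exfalso].
        assert (g i L + g j L <= F L).
        { apply (sumN_two n (fun k => g k L)); auto. intros k Hk. destruct (Hch k Hk L) as [[? ?] _]; auto. }
        lra.
Qed.

Lemma key_pos n l x0 (u : nat -> R) i :
  (forall j, (j < n)%nat -> in_Lc (l j)) ->
  is_wardrop n l (fun _ => 0) x0 -> (i < n)%nat -> 0 < x0 i ->
  (forall j, (j < n)%nat -> j <> i -> 0 <= u j) ->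
  u i <= l i (x0 i) - l i 0 ->
  forall x', is_wardrop n l u x' -> 0 < x' i.
Proof.
  intros Hl [H0n [H0s H0w]] Hi Hx0 Hu Hui x' [Hn [Hs Hw]].
  destruct (Rle_lt_or_eq_dec 0 (x' i) (Hn i Hi)) as [h|h]; [auto|exfalso].
  destruct (sumN_le_ex n x0 x' i) as [j [Hj [Hji Hlt]]]; [lra|auto|lra|].
  assert (Hxj : 0 < x' j) by (pose proof (H0n j Hj); lra).
  specialize (Hw j i Hj Hi Hxj). rewrite <- h in Hw.
  specialize (H0w i j Hi Hj Hx0). simpl in H0w.
  destruct (Hl j Hj) as [_ [Hs' _]]. specialize (Hs' (x0 j) (x' j) (H0n j Hj) Hlt).
  specialize (Hu j Hj Hji). lra.
Qed.

Theorem mainTheorem3 (n : nat) (l : nat -> R -> R) (c : R) (t : nat -> R) :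
  (2 <= n)%nat ->
  (forall i, (i < n)%nat -> in_Lc (l i)) ->
  (forall x0, is_wardrop n l (fun _ => 0) x0 -> forall i, (i < n)%nat -> 0 < x0 i) ->
  0 < c ->
  in_T n l c t ->
  forall i, (i < n)%nat ->
    (forall x, is_wardrop n l t x -> 0 < x i) /\ 0 < t i.
Proof.
  intros Hn Hl H0 Hc [Ht Hnash] i Hi.
  destruct (wardrop_exists n l (fun _ => 0) Hn Hl) as [x0 Hx0].
  pose proof (H0 x0 Hx0 i Hi) as Hx0i.
  set (d := l i (x0 i) - l i 0).
  assert (Hd : 0 < d).
  { unfold d. destruct (Hl i Hi) as [_ [Hs _]]. specialize (Hs 0 (x0 i) ltac:(lra) Hx0i). lra. }
  set (s := Rmin c d).
  assert (Hs0 : 0 < s) by (apply Rmin_pos; auto).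
  assert (Hsc : s <= c) by apply Rmin_l. assert (Hsd : s <= d) by apply Rmin_r.
  destruct (wardrop_exists n l (upd t i s) Hn Hl) as [x' Hx'].
  assert (Hx'i : 0 < x' i).
  { apply (key_pos n l x0 (upd t i s) i Hl Hx0 Hi Hx0i); auto.
    - intros j Hj Hji. unfold upd. destruct (Nat.eq_dec j i); [contradiction|]. apply Ht; auto.
    - unfold upd. destruct (Nat.eq_dec i i); [|contradiction]. auto. }
  assert (Hp : forall x, is_wardrop n l t x -> 0 < t i * x i).
  { intros x Hx. pose proof (Hnash i s x x' Hi ltac:(lra) Hx Hx'). nra. }
  destruct (Ht i Hi) as [Hti _].
  destruct (wardrop_exists n l t Hn Hl) as [x Hx].
  split.
  - intros y Hy. specialize (Hp y Hy). destruct Hy as [Hy _]. specialize (Hy i Hi).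
    destruct (Rle_lt_or_eq_dec 0 (y i) Hy) as [h|h]; [auto|rewrite <- h in Hp; lra].
  - specialize (Hp x Hx). destruct (Rle_lt_or_eq_dec 0 (t i) Hti) as [h|h]; [auto|rewrite <- h in Hp; lra].
Qed.
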